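(* Let $\Omega\subset\mathbb{R}^d$ be bounded, $T>0$, $Q_T=\Omega\times(0,T)$, $\alpha\in(0,1)$, and let $a_1,a_2,a_3$ be positive constants. Assume $f,g\in C^{\alpha,\alpha/2}(\bar Q_T)$ and $u_0\in C^\alpha(\bar\Omega)$. Then any (weak) solution $u\in L^\infty(Q_T)$ of $\partial_t u=a_1fu+a_2g-a_3u^2$ in $Q_T$, $u(x,0)=u_0(x)$ for $x\in\Omega$, belongs to $C^{\alpha,\alpha/2}(\bar Q_T)$, i.e. is $\alpha$-Hölder continuous on $\bar\Omega\times[0,T]$.
   Context: $C^{\alpha,\alpha/2}(\bar Q_T)$ is the space of bounded functions $u$ with finite seminorm $\sup_{(x_1,t_1)\ne(x_2,t_2)}\frac{|u(x_1,t_1)-u(x_2,t_2)|}{|x_1-x_2|^\alpha+|t_1-t_2|^{\alpha/2}}$, with norm $\|u\|_{L^\infty}$ plus this seminorm. *)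

(* Defs.v *)
From HB Require Import structures.
From mathcomp Require Import all_boot all_order all_algebra.
From mathcomp Require Import all_classical all_reals all_analysis.
Set Implicit Arguments. Unset Strict Implicit. Unset Printing Implicit Defensive.
Import Order.TTheory GRing.Theory Num.Theory.
Import numFieldNormedType.Exports.
Local Open Scope classical_set_scope.
Local Open Scope ring_scope.

Definition eucl_norm (R : realType) (d : nat) (x : 'rV[R]_d) : R :=
  Num.sqrt (\sum_(i < d) x ord0 i ^+ 2).

Definition eucl_bounded (R : realType) (d : nat) (Om : set 'rV[R]_d) : Prop :=
  exists M : R, forall x, Om x -> eucl_norm x <= M.

Definition holder_space (R : realType) (d : nat) (alpha : R)
  (A : set 'rV[R]_d) (v : 'rV[R]_d -> R) : Prop :=
  (exists M : R, forall x, A x -> `|v x| <= M) /\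
  (exists C : R, forall x y, A x -> A y ->
     `|v x - v y| <= C * (eucl_norm (x - y)) `^ alpha).

Definition par_holder_space (R : realType) (d : nat) (alpha : R)
  (A : set ('rV[R]_d * R)) (v : 'rV[R]_d -> R -> R) : Prop :=
  (exists M : R, forall p, A p -> `|v p.1 p.2| <= M) /\
  (exists C : R, forall p q, A p -> A q ->
     `|v p.1 p.2 - v q.1 q.2| <=
       C * ((eucl_norm (p.1 - q.1)) `^ alpha + `|p.2 - q.2| `^ (alpha / 2))).

Definition closed_cyl (R : realType) (d : nat) (Om : set 'rV[R]_d) (T : R)
  : set ('rV[R]_d * R) :=
  [set p | closure Om p.1 /\ 0 <= p.2 <= T].

(* u is an L^infty (weak) solution of
     d_t u = a1 f u + a2 g - a3 u^2 in Q_T,  u(x,0) = u0(x),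
   in the integrated (Duhamel) form: for every x in Omega, t |-> u(x,t) is
   measurable, u is essentially bounded, and
     u(x,t) = u0(x) + int_0^t (a1 f u + a2 g - a3 u^2)(x,s) ds. *)
Definition weak_solution (R : realType) (d : nat) (Om : set 'rV[R]_d)
  (T a1 a2 a3 : R) (f g : 'rV[R]_d -> R -> R) (u0 : 'rV[R]_d -> R)
  (u : 'rV[R]_d -> R -> R) : Prop :=
  (exists M : R, forall x t, Om x -> 0 <= t <= T -> `|u x t| <= M) /\
  (forall x, Om x -> measurable_fun `[0, T] (u x)) /\
  (forall x t, Om x -> 0 <= t <= T ->
     u x t = u0 x + Rintegral lebesgue_measure `[0, t]
               (fun s => a1 * f x s * u x s + a2 * g x s - a3 * u x s ^+ 2)).

(* Main.v *)
Require Import Defs.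
From HB Require Import structures.
From mathcomp Require Import all_boot all_order all_algebra.
From mathcomp Require Import all_classical all_reals all_analysis.
From mathcomp Require Import measurable_realfun ring lra.
Import Order.TTheory GRing.Theory Num.Theory.
Import numFieldNormedType.Exports.
Local Open Scope classical_set_scope.
Local Open Scope ring_scope.


Lemma cs_sum (R : realType) (n : nat) (a b : 'I_n -> R) :
  \sum_i a i * b i <= Num.sqrt (\sum_i a i ^+ 2) * Num.sqrt (\sum_i b i ^+ 2).
Proof.
set A := \sum_i a i ^+ 2; set B := \sum_i b i ^+ 2; set D := \sum_i a i * b i.
have A0 : 0 <= A by rewrite sumr_ge0 // => i _; rewrite sqr_ge0.
have B0 : 0 <= B by rewrite sumr_ge0 // => i _; rewrite sqr_ge0.
set sa := Num.sqrt A; set sb := Num.sqrt B.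
have sa2 : sa ^+ 2 = A by rewrite sqr_sqrtr.
have sb2 : sb ^+ 2 = B by rewrite sqr_sqrtr.
have sa0 : 0 <= sa by rewrite sqrtr_ge0.
have sb0 : 0 <= sb by rewrite sqrtr_ge0.
have E : \sum_i (sb * a i - sa * b i) ^+ 2 = sb ^+ 2 * A + sa ^+ 2 * B - (2 * sa * sb) * D.
  rewrite /A /B /D !mulr_sumr -big_split -sumrB; apply: eq_bigr => i _; move: (sb) (sa) (a i) (b i) => p q r s; rewrite /=; ring.
have H : 0 <= sb ^+ 2 * A + sa ^+ 2 * B - (2 * sa * sb) * D.
  by rewrite -E sumr_ge0 // => i _; rewrite sqr_ge0.
have [s0|spos] := eqVneq (sa * sb) 0.
  have [Az|Bz] : A = 0 \/ B = 0.
    move/eqP: s0; rewrite mulf_eq0 => /orP[] /eqP z.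
      by left; rewrite -sa2 z expr2 mulr0.
    by right; rewrite -sb2 z expr2 mulr0.
  - have ai : forall i, a i = 0.
      move=> i; apply/eqP; rewrite -sqrf_eq0; apply/eqP.
      move/eqP: Az; rewrite psumr_eq0 => [/allP H1|j _]; last by rewrite sqr_ge0.
      by apply/eqP; apply: H1; rewrite mem_index_enum.
    by rewrite s0 /D big1 // => i _; rewrite ai mul0r.
  - have bi : forall i, b i = 0.
      move=> i; apply/eqP; rewrite -sqrf_eq0; apply/eqP.
      move/eqP: Bz; rewrite psumr_eq0 => [/allP H1|j _]; last by rewrite sqr_ge0.
      by apply/eqP; apply: H1; rewrite mem_index_enum.
    by rewrite s0 /D big1 // => i _; rewrite bi mulr0.
have sgt : 0 < sa * sb by rewrite lt_def spos mulr_ge0.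
rewrite -sa2 -sb2 in H.
have H2 : (sa * sb) * D <= (sa * sb) * (sa * sb) by nra.
by rewrite -(ler_pM2l sgt).
Qed.

Lemma en_ge0 (R : realType) (d : nat) (x : 'rV[R]_d) : 0 <= eucl_norm x.
Proof. exact: sqrtr_ge0. Qed.

Lemma en_opp (R : realType) (d : nat) (x : 'rV[R]_d) : eucl_norm (- x) = eucl_norm x.
Proof. by rewrite /eucl_norm; congr Num.sqrt; apply: eq_bigr => i _; rewrite mxE sqrrN. Qed.

Lemma en_0 (R : realType) (d : nat) : eucl_norm (0 : 'rV[R]_d) = 0.
Proof. by rewrite /eucl_norm big1 ?sqrtr0 // => i _; rewrite mxE expr0n. Qed.

Lemma en_add (R : realType) (d : nat) (x y : 'rV[R]_d) :
  eucl_norm (x + y) <= eucl_norm x + eucl_norm y.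
Proof.
rewrite /eucl_norm.
have cs := @cs_sum _ _ (fun i => x ord0 i) (fun i => y ord0 i).
set A := \sum_i x ord0 i ^+ 2 in cs *; set B := \sum_i y ord0 i ^+ 2 in cs *.
have A0 : 0 <= A by rewrite sumr_ge0 // => i _; rewrite sqr_ge0.
have B0 : 0 <= B by rewrite sumr_ge0 // => i _; rewrite sqr_ge0.
have E : \sum_i (x + y) ord0 i ^+ 2 = A + B + 2 * \sum_i x ord0 i * y ord0 i.
  rewrite /A /B mulr_sumr -!big_split; apply: eq_bigr => i _; rewrite mxE; move: (x ord0 i) (y ord0 i) => p q; rewrite /=; ring.
rewrite E.
have s0 : 0 <= Num.sqrt A + Num.sqrt B by rewrite addr_ge0 ?sqrtr_ge0.
rewrite -[X in _ <= X]ger0_norm // -sqrtr_sqr ler_sqrt ?sqr_ge0 //.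
rewrite sqrrD !sqr_sqrtr //.
lra.
Qed.
Lemma powR_subadd (R : realType) (a b p : R) : 0 <= a -> 0 <= b -> 0 < p <= 1 ->
  (a + b) `^ p <= a `^ p + b `^ p.
Proof.
move=> a0 b0 /andP[p0 p1].
have [ab0|abpos] := eqVneq (a + b) 0.
  by rewrite ab0 powR0 ?gt_eqF// addr_ge0 // powR_ge0.
have abgt : 0 < a + b by rewrite lt_def abpos addr_ge0.
have key0 : forall r, 0 <= r <= 1 -> (a + b) `^ p * r <= ((a + b) * r) `^ p.
  move=> r /andP[r0 r1].
  have [->|rn0] := eqVneq r 0; first by rewrite mulr0 powR_ge0.
  rewrite powRM ?(ltW abgt) // ler_wpM2l ?powR_ge0 //.
  by apply: ger1_powR => //; rewrite lt_def rn0 r0.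
have key : forall c, 0 <= c -> c <= a + b -> (a + b) `^ p * (c / (a + b)) <= c `^ p.
  move=> c c0 cab.
  have e : (a + b) * (c / (a + b)) = c by rewrite mulrCA divff ?mulr1.
  have := key0 (c / (a + b)); rewrite e; apply.
  by rewrite divr_ge0 ?(ltW abgt) //= ler_pdivrMr // mul1r.
apply: le_trans (lerD (key a a0 _) (key b b0 _)); last 2 first.
  by rewrite lerDl. by rewrite lerDr.
by rewrite -mulrDr -mulrDl divff // mulr1.
Qed.

Definition rho (R : realType) (d : nat) (al : R) (p q : 'rV[R]_d * R) : R :=
  eucl_norm (p.1 - q.1) `^ al + `|p.2 - q.2| `^ (al / 2).
Arguments rho {R d} al p q.

Lemma pow_tri (R : realType) (b x y z : R) : 0 < b <= 1 -> 0 <= y -> 0 <= z -> x <= y + z ->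
  0 <= x -> x `^ b <= y `^ b + z `^ b.
Proof.
move=> /andP[b0 b1] y0 z0 xyz x0; apply: le_trans (@powR_subadd _ y z b y0 z0 _); last by rewrite b0.
apply: ge0_ler_powR => //; rewrite ?nnegrE ?addr_ge0 //; exact: ltW.
Qed.

Lemma rho_ge0 (R : realType) (d : nat) (al : R) p q : 0 <= @rho R d al p q.
Proof. by rewrite addr_ge0 ?powR_ge0. Qed.

Lemma rho_pp (R : realType) (d : nat) (al : R) p : 0 < al -> @rho R d al p p = 0.
Proof.
by move=> a0; rewrite /rho !subrr en_0 normr0 !powR0 ?addr0 // gt_eqF // divr_gt0.
Qed.

Lemma rho_sym (R : realType) (d : nat) (al : R) p q : @rho R d al p q = rho al q p.
Proof. by rewrite /rho -opprB en_opp distrC. Qed.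

Lemma rho_tri (R : realType) (d : nat) (al : R) p q r : 0 < al < 1 ->
  @rho R d al p r <= rho al p q + rho al q r.
Proof.
move=> /andP[a0 a1].
rewrite /rho addrACA; apply: lerD.
  apply: pow_tri; rewrite ?en_ge0 //; first by rewrite a0 (ltW a1).
  by have := @en_add _ _ (p.1 - q.1) (q.1 - r.1); rewrite addrA subrK.
apply: pow_tri; rewrite ?normr_ge0 ?divr_gt0 //= ?ler_distD //.
rewrite ler_pdivrMr // mul1r; apply: le_trans (ltW a1) _; by rewrite ler1n.
Qed.



Lemma min_lip (R : realType) (a b M : R) :
  `|Num.min a M - Num.min b M| <= `|a - b|.
Proof.
case: (leP a M) => ha; case: (leP b M) => hb; have h1 := ler_norm (a - b); have h2 : -(a - b) <= `|a - b| by rewrite -normrN ler_norm.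
all: rewrite ler_norml; apply/andP; split; lra.
Qed.

Lemma mcshane (R : realType) (P : Type) (rho : P -> P -> R) (S : set P)
  (u : P -> R) (C M : R) :
  (forall p q, 0 <= rho p q) -> (forall p, rho p p = 0) ->
  (forall p q, rho p q = rho q p) ->
  (forall p q r, rho p r <= rho p q + rho q r) -> 0 <= C ->
  (forall p, S p -> `|u p| <= M) ->
  (forall p q, S p -> S q -> `|u p - u q| <= C * rho p q) ->
  exists v : P -> R, (forall p, `|v p| <= `|M|) /\
    (forall p q, `|v p - v q| <= C * rho p q) /\ (forall p, S p -> v p = u p).
Proof.
move=> r0 rpp rsym rtri C0 uM uH.
have [->|/set0P [q0 Sq0]] := eqVneq S set0.
  by exists (fun _ => 0); split => [p|]; [rewrite normr0 | split => [p q|//]];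
    rewrite ?subrr ?normr0 ?mulr_ge0.
pose E p := [set u q + C * rho p q | q in S].
pose w p := inf (E p).
have Ene : forall p, E p !=set0 by move=> p; exists (u q0 + C * rho p q0), q0.
have lbE : forall p, lbound (E p) (- M).
  move=> p _ [q Sq <-]; have := uM q Sq; rewrite ler_norml => /andP[h _].
  by rewrite -[X in X <= _]addr0 lerD // mulr_ge0.
have wle : forall p q, S q -> w p <= u q + C * rho p q.
  by move=> p q Sq; apply: ge_inf; [exists (- M); exact: lbE | exists q].
have wge : forall p, - M <= w p by move=> p; apply: lb_le_inf.
have wS : forall p, S p -> w p = u p.
  move=> p Sp; apply/eqP; rewrite eq_le; apply/andP; split.
    by have := wle p p Sp; rewrite rpp mulr0 addr0.
  apply: lb_le_inf => // _ [q Sq <-].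
  have := uH p q Sp Sq; rewrite ler_norml => /andP[_ h].
  lra.
have wlip : forall p p', w p <= w p' + C * rho p p'.
  move=> p p'; rewrite -lerBlDr; apply: lb_le_inf => // _ [q Sq <-].
  rewrite lerBlDr; apply: le_trans (wle p q Sq) _.
  have := rtri p p' q; rewrite (rsym p' q) => h.
  have := ler_wpM2l C0 h; lra.
exists (fun p => Num.min (w p) M); split; [|split].
- move=> p; rewrite ler_norml; apply/andP; split.
    have h1 := ler_norm M; have h2 : - M <= `|M| by rewrite -normrN ler_norm.
    have h3 := wge p; case: (leP (w p) M) => h; lra.
  by rewrite ge_min (ler_norm M) orbT.
- move=> p q /=; apply: le_trans (min_lip _ _ _ _) _; rewrite ler_norml.
  have := wlip p q; have := wlip q p; rewrite (rsym q p); lra.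
- move=> p Sp /=; rewrite wS //; apply/min_l; have := uM p Sp.
  by move/(le_trans (ler_norm _)).
Qed.



Definition clampT (R : realType) (T t : R) := Num.max 0 (Num.min t T).
Arguments clampT {R} T t.

Lemma clampT_in (R : realType) (T t : R) : 0 <= T -> 0 <= clampT T t <= T.
Proof.
move=> T0; rewrite /clampT; case: (leP t T) => h1; [case: (leP 0 t) | case: (leP 0 T)] => h2;
  apply/andP; split; lra.
Qed.

Lemma clampT_id (R : realType) (T t : R) : 0 <= t <= T -> clampT T t = t.
Proof. by move=> /andP[h1 h2]; rewrite /clampT (min_l h2) (max_r h1). Qed.

Lemma clampT_lip (R : realType) (T s t : R) : 0 <= T -> `|clampT T s - clampT T t| <= `|s - t|.
Proof.
move=> T0; rewrite /clampT.
have h1 := ler_norm (s - t); have h2 : -(s - t) <= `|s - t| by rewrite -normrN ler_norm.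
case: (leP s T) => a; case: (leP t T) => b;
  [case: (leP 0 s) => c; case: (leP 0 t) => e
  |case: (leP 0 s) => c; case: (leP 0 T) => e
  |case: (leP 0 T) => c; case: (leP 0 t) => e
  |case: (leP 0 T) => c]; rewrite ler_norml; apply/andP; split; lra.
Qed.

Lemma holder_meas (R : realType) (T C b : R) (h : R -> R) : 0 <= T -> 0 < b ->
  (forall s t, 0 <= s <= T -> 0 <= t <= T -> `|h s - h t| <= C * `|s - t| `^ b) ->
  measurable_fun `[0, T] h.
Proof.
move=> T0 b0 hH0.
have [C1 [C0 hH]] : exists C1, 0 < C1 /\ forall s t, 0 <= s <= T -> 0 <= t <= T -> `|h s - h t| <= C1 * `|s - t| `^ b.
  exists (Num.max C 0 + 1); split; first by rewrite ltr_pwDr // le_max lexx orbT.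
  move=> s t hs ht; apply: le_trans (hH0 s t hs ht) _; rewrite ler_wpM2r ?powR_ge0 //.
  have : C <= Num.max C 0 by rewrite le_max lexx.
  lra.
clear hH0.
pose h' := fun t => h (clampT T t).
have hH' : forall s t, `|h' s - h' t| <= C1 * `|s - t| `^ b.
  move=> s t; apply: le_trans (hH _ _ (clampT_in _ _ _ T0) (clampT_in _ _ _ T0)) _.
  rewrite ler_wpM2l ?(ltW C0) //; apply: ge0_ler_powR; rewrite ?nnegrE ?(ltW b0) //.
  exact: clampT_lip.
have ch' : continuous h'.
  move=> t; apply/cvgrPdist_lt => e e0.
  pose δ := (e / (2 * C1)) `^ (b^-1).
  have δ0 : 0 < δ by rewrite powR_gt0 // divr_gt0 // mulr_gt0.
  rewrite nearE; apply/nbhs_ballP; exists δ => //= s hs.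
  rewrite /ball /= in hs.
  rewrite distrC; apply: le_lt_trans (hH' s t) _.
  have : `|s - t| `^ b <= δ `^ b.
    apply: ge0_ler_powR; rewrite ?nnegrE ?(ltW b0) ?(ltW δ0) //.
    by rewrite distrC ltW.
  rewrite /δ -powRrM mulVf ?gt_eqF // powRr1; last by rewrite divr_ge0 ?mulr_ge0 ?(ltW e0) ?(ltW C0).
  move=> hle.
  have : C1 * `|s - t| `^ b <= C1 * (e / (2 * C1)) by rewrite ler_wpM2l // ltW.
  have -> : C1 * (e / (2 * C1)) = e / 2 by field; rewrite gt_eqF.
  lra.
apply: (@eq_measurable_fun _ _ _ _ _ h').
  move=> t; rewrite inE /= in_itv /= => ht; by rewrite /h' clampT_id.
apply: measurable_funS (continuous_measurable_fun ch') => //.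
Unshelve. all: by end_near.
Qed.




Lemma bint (R : realType) (T W : R) (w : R -> R) (D : set R) : measurable D ->
  D `<=` `[0, T] -> measurable_fun `[0, T] w ->
  (forall t, 0 <= t <= T -> `|w t| <= W) ->
  (@lebesgue_measure R).-integrable D (EFin \o w).
Proof.
move=> mD DT mw wW; apply: measurable_bounded_integrable => //.
- apply: (@le_lt_trans _ _ (lebesgue_measure `[0, T])); first by apply: le_measure => //; rewrite inE. 
  by apply: compact_finite_measure; exact: segment_compact.
- exact: measurable_funS mw.
- exists W; split; first exact: num_real.
  move=> M hM x Dx; have := DT x Dx; rewrite /= in_itv /= => hx.
  exact: (le_trans (wW x hx) (ltW hM)).
Qed.

Lemma int_cst_itv (R : realType) (a b c : R) : a <= b ->
  Rintegral (@lebesgue_measure R) `[a, b] (fun _ => c) = c * (b - a).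
Proof.
move=> ab; rewrite Rintegral_cst // [X in fine X](lebesgue_measure_itv `[a, b]%R) /= lte_fin.
case: ifP => h; first by [].
have e : b = a by apply: le_anti; rewrite ab leNgt h.
by rewrite e subrr mulr0.

Qed.

Lemma int_cst_itv2 (R : realType) (a b c : R) : a <= b ->
  Rintegral (@lebesgue_measure R) `]a, b] (fun _ => c) = c * (b - a).
Proof.
move=> ab; rewrite Rintegral_cst // [X in fine X](lebesgue_measure_itv `]a, b]%R) /= lte_fin.
case: ifP => h; first by [].
have e : b = a by apply: le_anti; rewrite ab leNgt h.
by rewrite e subrr mulr0.

Qed.



Lemma gronwall (R : realType) (T L : R) : 0 < T -> 0 <= L ->
  exists K : R, forall (w : R -> R) (A W : R), 0 <= A ->
  measurable_fun `[0, T] w ->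
  (forall t, 0 <= t <= T -> `|w t| <= W) ->
  (forall t, 0 <= t <= T ->
     `|w t| <= A + L * Rintegral lebesgue_measure `[0, t] (fun s => `|w s|)) ->
  forall t, 0 <= t <= T -> `|w t| <= K * A.
Proof.
move=> T0 L0.
pose N := (Num.Def.archi_bound (2 * L * T)).+1.
have hN : 2 * L * T < N%:R.
  apply: lt_le_trans (archi_boundP _) _; first by rewrite mulr_ge0 ?mulr_ge0 // ltW.
  by rewrite ler_nat.
have N0 : 0 < N%:R :> R by rewrite ltr0n.
pose h := T / N%:R.
have h0 : 0 < h by rewrite divr_gt0.
have Lh : L * h <= 1 / 2.
  rewrite /h mulrA ler_pdivrMr //; nra.
pose c := fix c (k : nat) : R := if k is k'.+1 then 2 * (1 + L * c k' * T) else 1.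
have c0 : forall k, 0 <= c k.
  by elim=> [|k IH] /=; rewrite ?ler01 // mulr_ge0 // addr_ge0 // !mulr_ge0 // ltW.
exists (c N) => w A W A0 mw wW hw.
have mnw : measurable_fun `[0, T] (fun s => `|w s|).
  exact: (measurableT_comp (@normr_measurable R setT) mw).
have nwW : forall t, 0 <= t <= T -> `| `|w t| | <= W by move=> t ht; rewrite normr_id wW.
have claim : forall k t, 0 <= t <= T -> t <= k%:R * h -> `|w t| <= c k * A.
  elim=> [|k IH] t ht tk.
    rewrite mul0r in tk; have t0 : t = 0 by apply: le_anti; rewrite tk; case/andP: ht.
    move: (hw t ht); rewrite t0 set_itv1 Rintegral_set1 mulr0 addr0 /= mul1r.
    by [].
  pose J := [set s | 0 <= s <= T /\ s <= k.+1%:R * h].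
  have J0 : J 0 by split; rewrite ?lexx ?(ltW T0) // mulr_ge0 // ltW.
  pose E := [set `|w s| | s in J].
  have hub : has_ubound E by exists W => _ [s [Js _] <-]; exact: le_trans (ler_norm _) (nwW s Js).
  pose S := sup E.
  have hS : forall s, J s -> `|w s| <= S by move=> s Js; apply: ub_le_sup => //; exists s.
  have S0 : 0 <= S by have := hS 0 J0; apply: le_trans.
  have kh0 : 0 <= k%:R * h by rewrite mulr_ge0 // ltW.
  have k1h : k.+1%:R * h = k%:R * h + h by rewrite -addn1 natrD mulrDl mul1r.
  have cA0 : 0 <= c k * A by rewrite mulr_ge0.
  have key : forall r, J r ->
      Rintegral lebesgue_measure `[0, r] (fun s => `|w s|) <= c k * A * T + S * h.
    move=> r [hr rk1].
    have r0 : 0 <= r by case/andP: hr.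
    have rT : r <= T by case/andP: hr.
    have int0r : (@lebesgue_measure R).-integrable `[0, r] (EFin \o (fun s => `|w s|)).
      apply: (@bint R T W) => //; first by move=> x /=; rewrite !in_itv /= => /andP[-> /le_trans]; apply.
    have [rk|rk] := leP r (k%:R * h).
      apply: le_trans (_ : c k * A * r <= _); last first.
        by rewrite -[X in X <= _]addr0 lerD ?ler_wpM2l ?mulr_ge0 // ltW.
      rewrite -{2}(subr0 r) -int_cst_itv //.
      apply: le_Rintegral => //.
        apply: (@bint R T `|c k * A|) => //.
        by move=> x /=; rewrite !in_itv /= => /andP[-> /le_trans]; apply.
      move=> s; rewrite /= in_itv /= => /andP[s0 st].
      apply: IH; rewrite ?s0 ?(le_trans st) //.
    have khr : k%:R * h <= r by exact: ltW.
    have ekh : Rintegral lebesgue_measure `[0, r] (fun s => `|w s|) =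
        Rintegral lebesgue_measure `[0, k%:R * h] (fun s => `|w s|) +
        Rintegral lebesgue_measure `]k%:R * h, r] (fun s => `|w s|).
      have := @Rintegral_itvB R (fun s => `|w s|) (BLeft 0) (BRight r) (k%:R * h) int0r.
      rewrite !bnd_simp => /(_ kh0 khr) <-.
      by rewrite addrC subrK.
    rewrite ekh.
    have i1 : Rintegral lebesgue_measure `[0, k%:R * h] (fun s => `|w s|) <= c k * A * (k%:R * h - 0).
      rewrite -int_cst_itv //; apply: le_Rintegral => //.
      - apply: (@bint R T W) => //.
        by move=> x /=; rewrite !in_itv /= => /andP[-> xk]; rewrite (le_trans xk) // (le_trans khr).
      - apply: (@bint R T `|c k * A|) => //.
        by move=> x /=; rewrite !in_itv /= => /andP[-> xk]; rewrite (le_trans xk) // (le_trans khr).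
      - move=> s; rewrite /= in_itv /= => /andP[s0 st].
        by apply: IH; rewrite ?s0 ?(le_trans st) // (le_trans khr).
    have i2 : Rintegral lebesgue_measure `]k%:R * h, r] (fun s => `|w s|) <= S * (r - k%:R * h).
      rewrite -int_cst_itv2 //; apply: le_Rintegral => //.
      - apply: (@bint R T W) => //.
        by move=> x /=; rewrite !in_itv /= => /andP[xk xr]; rewrite (le_trans kh0 (ltW xk)) /= (le_trans xr rT).
      - apply: (@bint R T `|S|) => //.
        by move=> x /=; rewrite !in_itv /= => /andP[xk xr]; rewrite (le_trans kh0 (ltW xk)) /= (le_trans xr rT).
      - move=> s; rewrite /= in_itv /= => /andP[s0 st].
        apply: hS; split; last by rewrite (le_trans st).
        by rewrite (le_trans kh0 (ltW s0)) /= (le_trans st rT).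
    have i3 : c k * A * (k%:R * h - 0) <= c k * A * T.
      by rewrite subr0 ler_wpM2l // (le_trans khr).
    have i4 : S * (r - k%:R * h) <= S * h.
      by rewrite ler_wpM2l //; move: rk1; rewrite k1h; lra.
    lra.
  have SQ : S <= A + L * (c k * A * T + S * h).
    apply: ge_sup; first by exists `|w 0|, 0.
    move=> _ [s Js <-]; apply: le_trans (hw s Js.1) _.
    by rewrite lerD2l ler_wpM2l //; exact: key.
  have hLS : L * h * S <= 1 / 2 * S by rewrite ler_wpM2r.
  have Sle : S <= c k.+1 * A.
    have e : c k.+1 * A = 2 * A + 2 * (L * (c k * A * T)) by rewrite /=; ring.
    have e2 : L * (c k * A * T + S * h) = L * (c k * A * T) + L * h * S by ring.
    rewrite e; rewrite e2 in SQ; lra.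
  apply: le_trans (hS t _) Sle; split => //.
move=> t ht; apply: (claim N) => //.
rewrite /h mulrCA divff ?mulr1 ?gt_eqF //; by case/andP: ht.
Qed.

Theorem lemma5 (R : realType) (d : nat) (Om : set 'rV[R]_d)
  (T alpha a1 a2 a3 : R) (f g u : 'rV[R]_d -> R -> R) (u0 : 'rV[R]_d -> R) :
  eucl_bounded Om -> 0 < T -> 0 < alpha < 1 ->
  0 < a1 -> 0 < a2 -> 0 < a3 ->
  par_holder_space alpha (closed_cyl Om T) f ->
  par_holder_space alpha (closed_cyl Om T) g ->
  holder_space alpha (closure Om) u0 ->
  weak_solution Om T a1 a2 a3 f g u0 u ->
  exists v : 'rV[R]_d -> R -> R,
    par_holder_space alpha (closed_cyl Om T) v /\
    (forall x t, Om x -> 0 <= t <= T -> v x t = u x t).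
Proof.
move=> _ T0 /andP[al0 al1] a10 a20 a30 [[Mf hMf] [Cf hCf]] [[Mg hMg] [Cg hCg]]
  [[M0 hM0] [C0 hC0]] [[Mu hMu] [umeas hu]].
have al20 : 0 < alpha / 2 by rewrite divr_gt0.
have cl : forall x, Om x -> closure Om x by move=> x; exact: subset_closure.
have inC : forall x s, Om x -> 0 <= s <= T -> closed_cyl Om T (x, s).
  by move=> x s Ox hs; split => //; exact: cl.
set mf := `|Mf|; set mg := `|Mg|; set mu := `|Mu|.
have mf0 : 0 <= mf by exact: normr_ge0.
have mg0 : 0 <= mg by exact: normr_ge0.
have mu0 : 0 <= mu by exact: normr_ge0.
have fB : forall x s, Om x -> 0 <= s <= T -> `|f x s| <= mf.
  by move=> x s Ox hs; apply: le_trans (hMf (x, s) (inC x s Ox hs)) (ler_norm _).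
have gB : forall x s, Om x -> 0 <= s <= T -> `|g x s| <= mg.
  by move=> x s Ox hs; apply: le_trans (hMg (x, s) (inC x s Ox hs)) (ler_norm _).
have uB : forall x s, Om x -> 0 <= s <= T -> `|u x s| <= mu.
  by move=> x s Ox hs; apply: le_trans (hMu x s Ox hs) (ler_norm _).
have tH : forall (h : 'rV[R]_d -> R -> R) C, (forall p q, closed_cyl Om T p -> closed_cyl Om T q ->
     `|h p.1 p.2 - h q.1 q.2| <= C * (eucl_norm (p.1 - q.1) `^ alpha + `|p.2 - q.2| `^ (alpha / 2))) ->
    forall x s t, Om x -> 0 <= s <= T -> 0 <= t <= T -> `|h x s - h x t| <= C * `|s - t| `^ (alpha / 2).
  move=> h C hC x s t Ox hs ht.
  have := hC (x, s) (x, t) (inC x s Ox hs) (inC x t Ox ht).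
  by rewrite /= subrr en_0 powR0 ?gt_eqF // add0r.
have fmeas : forall x, Om x -> measurable_fun `[0, T] (f x).
  move=> x Ox; apply: (@holder_meas R T Cf (alpha / 2)) => //; first exact: ltW.
  by move=> s t hs ht; apply: tH.
have gmeas : forall x, Om x -> measurable_fun `[0, T] (g x).
  move=> x Ox; apply: (@holder_meas R T Cg (alpha / 2)) => //; first exact: ltW.
  by move=> s t hs ht; apply: tH.
pose F := fun x s => a1 * f x s * u x s + a2 * g x s - a3 * u x s ^+ 2.
have Fmeas : forall x, Om x -> measurable_fun `[0, T] (F x).
  move=> x Ox; rewrite /F.
  have mu' := umeas x Ox.
  exact: (measurable_funB (measurable_funD (measurable_funM (measurable_funM (measurable_cst a1) (fmeas x Ox)) mu')
    (measurable_funM (measurable_cst a2) (gmeas x Ox))) (measurable_funM (measurable_cst a3) (measurable_funM mu' mu'))).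

pose MF := a1 * mf * mu + a2 * mg + a3 * mu ^+ 2.
have FB : forall x s, Om x -> 0 <= s <= T -> `|F x s| <= MF.
  move=> x s Ox hs; have hf := fB x s Ox hs; have hg := gB x s Ox hs; have hu' := uB x s Ox hs.
  have e1 : `|a1 * f x s * u x s| <= a1 * mf * mu.
    by rewrite !normrM (gtr0_norm a10) ler_pM ?mulr_ge0 ?normr_ge0 ?ler_wpM2l ?(ltW a10).
  have e2 : `|a2 * g x s| <= a2 * mg.
    by rewrite normrM (gtr0_norm a20) ler_wpM2l ?(ltW a20).
  have e3 : `|a3 * u x s ^+ 2| <= a3 * mu ^+ 2.
    by rewrite normrM normrX (gtr0_norm a30) ler_wpM2l ?(ltW a30) // !expr2 ler_pM.
  rewrite /F /MF; apply: le_trans (ler_normB _ _) _; apply: lerD => //.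
  by apply: le_trans (ler_normD _ _) _; apply: lerD.
have a1p := ltW a10; have a2p := ltW a20; have a3p := ltW a30.
have MF0 : 0 <= MF by rewrite /MF !addr_ge0 ?mulr_ge0 ?exprn_ge0.
have Fint : forall x D, Om x -> measurable D -> D `<=` `[0, T] ->
    (@lebesgue_measure R).-integrable D (EFin \o F x).
  move=> x D Ox mD DT; apply: (@bint R T MF) => //; first exact: Fmeas.
  by move=> t ht; exact: FB.
have hI : forall x r, Om x -> 0 <= r <= T ->
    u x r = u0 x + Rintegral lebesgue_measure `[0, r] (F x).
  by move=> x r Ox hr; exact: hu.
have sub0 : forall r, r <= T -> `[0, r] `<=` `[0, T].
  by move=> r rT z /=; rewrite !in_itv /= => /andP[-> /le_trans]; apply.
have subo : forall s r, 0 <= s -> r <= T -> `]s, r] `<=` `[0, T].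
  move=> s r s0 rT z /=; rewrite !in_itv /= => /andP[sz zr].
  by rewrite (le_trans s0 (ltW sz)) (le_trans zr rT).
have timeL : forall x s t, Om x -> 0 <= s <= T -> 0 <= t <= T ->
    `|u x t - u x s| <= MF * `|t - s|.
  move=> x s t Ox.
  wlog st : s t / s <= t.
    move=> W hs ht; have [st|ts] := leP s t; first exact: W.
    by rewrite distrC (distrC t); apply: W => //; exact: ltW.
  move=> hs ht; rewrite (hI x t Ox ht) (hI x s Ox hs) opprD addrACA subrr add0r.
  have tT : t <= T by case/andP: ht.
  have s0 : 0 <= s by case/andP: hs.
  have := @Rintegral_itvB R (F x) (BLeft 0) (BRight t) s (Fint x _ Ox (measurable_itv _) (sub0 t tT)).
  rewrite !bnd_simp => /(_ s0 st) ->.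
  rewrite [`|t - s|]ger0_norm ?subr_ge0 //.
  have iST := Fint x _ Ox (measurable_itv `]s, t]) (subo s t s0 tT).
  apply: le_trans (le_normr_Rintegral _ iST) _ => //.
  rewrite -int_cst_itv2 //; apply: le_Rintegral => //.
  - exact: integrable_norm.
  - apply: (@bint R T `|MF|) => //.
    exact: (subo s t s0 tT).
  - move=> r; rewrite /= in_itv /= => /andP[sr rt]; apply: FB => //.
    by rewrite (le_trans s0 (ltW sr)) (le_trans rt tT).
pose cf := `|Cf|; pose cg := `|Cg|; pose c0 := `|C0|.
pose B := a1 * cf * mu + a2 * cg.
pose L := a1 * mf + a3 * (2 * mu).
have B0 : 0 <= B := addr_ge0 (mulr_ge0 (mulr_ge0 a1p (normr_ge0 _)) mu0) (mulr_ge0 a2p (normr_ge0 _)).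
have L0 : 0 <= L := addr_ge0 (mulr_ge0 a1p mf0) (mulr_ge0 a3p (mulr_ge0 (ler0n _ 2) mu0)).
have [K hK] := @gronwall R T L T0 L0.
have spaceL : forall x y t, Om x -> Om y -> 0 <= t <= T ->
    `|u x t - u y t| <= (`|K| * (c0 + B * T)) * eucl_norm (x - y) `^ alpha.
  move=> x y t Ox Oy ht.
  set δ := eucl_norm (x - y) `^ alpha.
  have δ0 : 0 <= δ by exact: powR_ge0.
  pose w := fun s => u x s - u y s.
  have A0 : 0 <= (c0 + B * T) * δ := mulr_ge0 (addr_ge0 (normr_ge0 _) (mulr_ge0 B0 (ltW T0))) δ0.
  have wB : forall s, 0 <= s <= T -> `|w s| <= 2 * mu.
    move=> s hs; apply: le_trans (ler_normB _ _) _.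
    by have := uB x s Ox hs; have := uB y s Oy hs; lra.
  have mw : measurable_fun `[0, T] w := measurable_funB (umeas x Ox) (umeas y Oy).
  have pw : forall s, 0 <= s <= T -> `|F x s - F y s| <= B * δ + L * `|w s|.
    move=> s hs.
    have hfd : `|f x s - f y s| <= cf * δ.
      have := hCf (x, s) (y, s) (inC x s Ox hs) (inC y s Oy hs).
      rewrite /= subrr normr0 powR0 ?gt_eqF // addr0 => /le_trans; apply.
      by apply: ler_wpM2r => //; exact: ler_norm.
    have hgd : `|g x s - g y s| <= cg * δ.
      have := hCg (x, s) (y, s) (inC x s Ox hs) (inC y s Oy hs).
      rewrite /= subrr normr0 powR0 ?gt_eqF // addr0 => /le_trans; apply.
      by apply: ler_wpM2r => //; exact: ler_norm.
    have hux := uB x s Ox hs; have huy := uB y s Oy hs; have hfy := fB y s Oy hs.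
    have e : F x s - F y s = a1 * (f x s - f y s) * u x s + a1 * f y s * w s
        + a2 * (g x s - g y s) - a3 * (u x s + u y s) * w s by rewrite /F /w; ring.
    have t1 : `|a1 * (f x s - f y s) * u x s| <= a1 * (cf * δ) * mu.
      by rewrite !normrM (gtr0_norm a10) ler_pM ?mulr_ge0 ?normr_ge0 ?ler_wpM2l.
    have t2 : `|a1 * f y s * w s| <= a1 * mf * `|w s|.
      by rewrite !normrM (gtr0_norm a10) ler_wpM2r ?normr_ge0 ?ler_wpM2l.
    have t3 : `|a2 * (g x s - g y s)| <= a2 * (cg * δ).
      by rewrite normrM (gtr0_norm a20) ler_wpM2l.
    have t4 : `|a3 * (u x s + u y s) * w s| <= a3 * (2 * mu) * `|w s|.
      rewrite !normrM (gtr0_norm a30) ler_wpM2r ?normr_ge0 ?ler_wpM2l //.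
      by apply: le_trans (ler_normD _ _) _; lra.
    have e2 : a1 * (cf * δ) * mu + a1 * mf * `|w s| + a2 * (cg * δ) + a3 * (2 * mu) * `|w s|
        = B * δ + L * `|w s| by rewrite /B /L; ring.
    rewrite e -e2; apply: le_trans (ler_normB _ _) _; apply: lerD => //.
    apply: le_trans (ler_normD _ _) _; apply: lerD => //.
    by apply: le_trans (ler_normD _ _) _; apply: lerD.
  have hw : forall r, 0 <= r <= T ->
      `|w r| <= (c0 + B * T) * δ + L * Rintegral lebesgue_measure `[0, r] (fun s => `|w s|).
    move=> r hr; have rT : r <= T by case/andP: hr.
    have r0 : 0 <= r by case/andP: hr.
    have mr : measurable (`[0, r] : set R) by exact: measurable_itv.
    have iFx := Fint x _ Ox mr (sub0 r rT).
    have iFy := Fint y _ Oy mr (sub0 r rT).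
    have mnw : measurable_fun `[0, T] (fun s => `|w s|).
      exact: (measurableT_comp (@normr_measurable R setT) mw).
    have inw : (@lebesgue_measure R).-integrable `[0, r] (EFin \o (fun s => `|w s|)).
      apply: (@bint R T (2 * mu)) => //; first exact: sub0.
      by move=> s hs; rewrite normr_id; exact: wB.
    have iD : (@lebesgue_measure R).-integrable `[0, r] (EFin \o (fun s => F x s - F y s)).
      apply: (@bint R T (MF + MF)) => //; first exact: sub0.
        exact: measurable_funB (Fmeas x Ox) (Fmeas y Oy).
      move=> s hs; apply: le_trans (ler_normB _ _) _; apply: lerD; exact: FB.
    have iG : (@lebesgue_measure R).-integrable `[0, r] (EFin \o (fun s => B * δ + L * `|w s|)).
      apply: (@bint R T (B * δ + L * (2 * mu))) => //; first exact: sub0.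
        exact: measurable_funD (measurable_cst _) (measurable_funM (measurable_cst _) mnw).
      move=> s hs; rewrite ger0_norm ?addr_ge0 ?mulr_ge0 //.
      by rewrite lerD2l ler_wpM2l //; exact: wB.
    have icst : (@lebesgue_measure R).-integrable `[0, r] (EFin \o (fun _ : R => B * δ)).
      apply: (@bint R T (B * δ)) => //; first exact: sub0.
      by move=> *; rewrite ger0_norm ?mulr_ge0.
    have iLw : (@lebesgue_measure R).-integrable `[0, r] (EFin \o (fun s => L * `|w s|)).
      apply: (@bint R T (L * (2 * mu))) => //; first exact: sub0.
        exact: measurable_funM (measurable_cst _) mnw.
      move=> s hs; rewrite normrM normr_id (ger0_norm L0) ler_wpM2l //; exact: wB.
    have ew : w r = (u0 x - u0 y) + Rintegral lebesgue_measure `[0, r] (fun s => F x s - F y s).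
      rewrite RintegralB // /w (hI x r Ox hr) (hI y r Oy hr); ring.
    have hu0 : `|u0 x - u0 y| <= c0 * δ.
      apply: le_trans (hC0 x y (cl x Ox) (cl y Oy)) _.
      by apply: ler_wpM2r => //; exact: ler_norm.
    have hint : `|Rintegral lebesgue_measure `[0, r] (fun s => F x s - F y s)| <=
        B * δ * r + L * Rintegral lebesgue_measure `[0, r] (fun s => `|w s|).
      apply: le_trans (le_normr_Rintegral _ iD) _ => //.
      apply: le_trans (_ : _ <= Rintegral lebesgue_measure `[0, r] (fun s => B * δ + L * `|w s|)) _.
        apply: le_Rintegral => //; first exact: integrable_norm.
        move=> s; rewrite /= in_itv /= => /andP[s0 sr]; apply: pw.
        by rewrite s0 (le_trans sr rT).
      rewrite RintegralD // int_cst_itv // subr0 RintegralZl //.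
    rewrite ew; apply: le_trans (ler_normD _ _) _.
    apply: le_trans (lerD hu0 hint) _.
    set I := Rintegral _ _ _.
    rewrite (_ : (c0 + B * T) * δ + L * I = c0 * δ + (B * T * δ + L * I)); last by ring.
    rewrite lerD2l lerD2r.
    by rewrite -mulrA [δ * r]mulrC mulrA ler_wpM2r // ler_wpM2l.
  apply: le_trans (hK w _ (2 * mu) A0 mw wB hw t ht) _.
  rewrite mulrA; apply: ler_wpM2r => //; apply: ler_wpM2r; [exact: addr_ge0 (normr_ge0 _) (mulr_ge0 B0 (ltW T0)) | exact: ler_norm].
pose K1 := `|K| * (c0 + B * T).
have K10 : 0 <= K1 := mulr_ge0 (normr_ge0 _) (addr_ge0 (normr_ge0 _) (mulr_ge0 B0 (ltW T0))).
pose T' := T `^ (1 - alpha / 2).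
have T'0 : 0 <= T' := powR_ge0 _ _.
have tpow : forall t s, 0 <= t <= T -> 0 <= s <= T -> `|t - s| <= T' * `|t - s| `^ (alpha / 2).
  move=> t s ht hs; set z := `|t - s|.
  have z0 : 0 <= z := normr_ge0 _.
  have zT : z <= T.
    rewrite /z ler_norml; case/andP: ht => t0 tT; case/andP: hs => s0 sT.
    by apply/andP; split; lra.
  have [->|zn0] := eqVneq z 0; first by rewrite mulr_ge0 ?powR_ge0.
  have e : z = z `^ (alpha / 2) * z `^ (1 - alpha / 2).
    by rewrite -powRD ?zn0 ?implybT // addrC subrK powRr1.
  rewrite [X in X <= _]e mulrC ler_wpM2r ?powR_ge0 //.
  apply: ge0_ler_powR; rewrite ?nnegrE ?subr_ge0 //; last exact: ltW.
  by rewrite ler_pdivrMr // mul1r (le_trans (ltW al1)) // ler1n.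
pose Ctot := K1 + MF * T'.
have Ct0 : 0 <= Ctot := addr_ge0 K10 (mulr_ge0 MF0 T'0).
pose S := [set p : 'rV[R]_d * R | Om p.1 /\ 0 <= p.2 <= T].

have uH : forall p q, S p -> S q -> `|u p.1 p.2 - u q.1 q.2| <= Ctot * rho alpha p q.
  move=> [x1 t1] [y1 s1] [/= Ox ht] [/= Oy hs]; rewrite /rho /=.
  have h1 := spaceL x1 y1 t1 Ox Oy ht.
  have h2 := timeL y1 s1 t1 Oy hs ht.
  have h3 := tpow t1 s1 ht hs.
  have p1 : 0 <= eucl_norm (x1 - y1) `^ alpha := powR_ge0 _ _.
  have p2 : 0 <= `|t1 - s1| `^ (alpha / 2) := powR_ge0 _ _.
  rewrite -/K1 in h1.
  have h4 : MF * `|t1 - s1| <= MF * T' * `|t1 - s1| `^ (alpha / 2).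
    by rewrite -mulrA ler_wpM2l.
  have h5 : `|u x1 t1 - u y1 s1| <= `|u x1 t1 - u y1 t1| + `|u y1 t1 - u y1 s1|.
    by rewrite (le_trans _ (ler_normD _ _)) // addrA subrK.
  have h6 : Ctot * (eucl_norm (x1 - y1) `^ alpha + `|t1 - s1| `^ (alpha / 2)) =
     K1 * eucl_norm (x1 - y1) `^ alpha + MF * T' * `|t1 - s1| `^ (alpha / 2) +
     (K1 * `|t1 - s1| `^ (alpha / 2) + MF * T' * eucl_norm (x1 - y1) `^ alpha) by rewrite /Ctot; ring.
  rewrite h6; apply: le_trans h5 _.
  rewrite -[X in X <= _]addr0; apply: lerD; last exact: addr_ge0 (mulr_ge0 K10 p2) (mulr_ge0 (mulr_ge0 MF0 T'0) p1).
  by apply: lerD => //; apply: le_trans h2 h4.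
have uMu : forall p, S p -> `|u p.1 p.2| <= Mu by move=> [x t] [/= Ox ht]; exact: hMu.
have alb : 0 < alpha < 1 by rewrite al0 al1.
have [v' [v'B [v'H v'S]]] := @mcshane R _ (rho alpha) S (fun p => u p.1 p.2) Ctot Mu
  (@rho_ge0 R d alpha) (fun p => @rho_pp R d alpha p al0) (@rho_sym R d alpha)
  (fun p q r => @rho_tri R d alpha p q r alb) Ct0 uMu uH.
exists (fun x t => v' (x, t)); split; last first.
  by move=> x t Ox ht; rewrite v'S.
split; first by exists `|Mu| => p _; exact: v'B.
exists Ctot => [[x t] [y s] _ _] /=.
exact: v'H (x, t) (y, s).
Qed.
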